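(* Let $\mathbf{k}$ be a commutative ring and $(\mathcal{C},\Pi,\xi)$ a supercategory. (i) There is a superfunctor $\Phi:\mathcal{C}^{ct}\to\mathcal{C}^{rev}$ given by $\Phi(X,\varphi)=X$ with $\alpha_\Phi(X,\varphi)=\varphi^{-1}:\Phi\Pi^{ct}(X,\varphi)=X\to\Pi X=\Pi^{rev}\Phi(X,\varphi)$. (ii) Assume $\mathcal{C}$ is $\mathbf{k}$-linear additive and $2$ is invertible in $\mathbf{k}$. (a) There is a superfunctor $\Psi:\mathcal{C}^{rev}\to\mathcal{C}^{ct}$ with $\Psi(X)=(X\oplus\Pi X,\varphi_X)$ and $\alpha_\Psi(X)=\psi_X:\Psi\Pi^{rev}(X)=\Pi X\oplus\Pi^2X\to X\oplus\Pi X=\Pi^{ct}\Psi(X)$, where $\varphi_X=\begin{pmatrix}0&\xi_X\\ \mathrm{id}_{\Pi X}&0\end{pmatrix}$ and $\psi_X=\begin{pmatrix}0&-\xi_X\\ \mathrm{id}_{\Pi X}&0\end{pmatrix}$ as maps $\Pi X\oplus\Pi^2X\to X\oplus\Pi X$. (b) There are canonical isomorphisms $\Phi\Psi(X)\cong X\oplus\Pi X$ and $\Psi\Phi(Z)\cong Z\oplus\Pi^{ct}Z$, functorial in $X\in\mathcal{C}$ and $Z\in\mathcal{C}^{ct}$. (iii) There are isomorphisms $\Pi\circ\Phi\cong\Phi\circ\Pi^{ct}\cong\Phi$ and $\Pi^{ct}\circ\Psi\cong\Psi\circ\Pi\cong\Psi$. (iv) $\Phi$ and $\Psi$ are biadjoint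 to each other ($\Phi$ is both a left and a right adjoint of $\Psi$).
   Context: A supercategory is a $\mathbf{k}$-linear additive category $\mathcal{C}$ with an endofunctor $\Pi$ and an isomorphism $\xi:\Pi^2\xrightarrow\sim\mathrm{id}_{\mathcal{C}}$ such that $\xi\circ\Pi=\Pi\circ\xi$. A superfunctor $(F,\alpha_F):(\mathcal{C},\Pi,\xi)\to(\mathcal{C}',\Pi',\xi')$ is a functor $F$ with an isomorphism $\alpha_F:F\circ\Pi\xrightarrow\sim\Pi'\circ F$ such that $(\xi'\circ F)\circ(\Pi'\circ\alpha_F)\circ(\alpha_F\circ\Pi)=F\circ\xi$. The reversed supercategory is $\mathcal{C}^{rev}=(\mathcal{C},\Pi,-\xi)$. The Clifford twist $\mathcal{C}^{ct}$ has objects pairs $(X,\varphi)$ with $\varphi:\Pi X\xrightarrow\sim X$ satisfying $\varphi\circ\Pi\varphi=\xi_X$, morphisms $(X,\varphi)\to(X',\varphi')$ those $f:X\to X'$ with $f\circ\varphi=\varphi'\circ\Pi f$, $\Pi^{ct}(X,\varphi)=(X,-\varphi)$ and $\xi^{ct}=\mathrm{id}$. *)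

(* Defs.v *)
From HB Require Import structures.
From mathcomp Require Import all_boot all_algebra.
Set Implicit Arguments. Unset Strict Implicit. Unset Printing Implicit Defensive.
Import GRing.Theory.
Local Open Scope ring_scope.

(* Used as the common
   interface for C^rev and C^ct, between which superfunctors go.            *)
Record scat := SCat {
  sobj :> Type;
  shom : sobj -> sobj -> Type;
  sid : forall X, shom X X;
  scomp : forall X Y Z, shom Y Z -> shom X Y -> shom X Z;
  sPi : sobj -> sobj;
  sPim : forall X Y, shom X Y -> shom (sPi X) (sPi Y);
  sxi : forall X, shom (sPi (sPi X)) X }.
Arguments shom {s}. Arguments sid {s} X. Arguments scomp {s X Y Z}.
Arguments sPi {s}. Arguments sPim {s X Y}. Arguments sxi {s} X.

Record fdata (D E : scat) := FData {
  fo : D -> E;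
  fm : forall X Y : D, shom X Y -> shom (fo X) (fo Y) }.
Arguments fo {D E}. Arguments fm {D E} f {X Y}.

Definition is_functor (D E : scat) (F : fdata D E) : Prop :=
  (forall X : D, fm F (sid X) = sid (fo F X)) /\
  (forall (X Y Z : D) (g : shom Y Z) (f : shom X Y),
      fm F (scomp g f) = scomp (fm F g) (fm F f)).

Definition fcomp (D E G : scat) (G' : fdata E G) (F : fdata D E) : fdata D G :=
  @FData D G (fun X => fo G' (fo F X)) (fun X Y f => fm G' (fm F f)).
Definition fid (D : scat) : fdata D D := @FData D D (fun X => X) (fun X Y f => f).
Definition fPi (D : scat) : fdata D D := @FData D D sPi (fun X Y f => sPim f).

Definition is_nat (D E : scat) (F G : fdata D E)
    (eta : forall X : D, shom (fo F X) (fo G X)) : Prop :=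
  forall (X Y : D) (f : shom X Y), scomp (eta Y) (fm F f) = scomp (fm G f) (eta X).
Arguments is_nat {D E} F G eta.

Definition is_iso_s (E : scat) (X Y : E) (f : shom X Y) : Prop :=
  exists g : shom Y X, scomp g f = sid X /\ scomp f g = sid Y.

Definition nat_iso (D E : scat) (F G : fdata D E) : Prop :=
  exists eta : forall X : D, shom (fo F X) (fo G X),
    is_nat F G eta /\ forall X, is_iso_s (eta X).

Definition is_superfunctor (D E : scat) (F : fdata D E)
    (alpha : forall X : D, shom (fo F (sPi X)) (sPi (fo F X))) : Prop :=
  [/\ is_functor F,
      is_nat (fcomp F (fPi D)) (fcomp (fPi E) F) alpha,
      (forall X, is_iso_s (alpha X)) &
      forall X : D,
        scomp (sxi (fo F X)) (scomp (sPim (alpha X)) (alpha (sPi X)))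
        = fm F (sxi X)].

Definition adjoint (D E : scat) (F : fdata D E) (G : fdata E D) : Prop :=
  exists (eta : forall X : D, shom X (fo G (fo F X)))
         (eps : forall Y : E, shom (fo F (fo G Y)) Y),
    [/\ is_nat (fid D) (fcomp G F) eta,
        is_nat (fcomp F G) (fid E) eps,
        (forall X : D, scomp (eps (fo F X)) (fm F (eta X)) = sid (fo F X)) &
        (forall Y : E, scomp (fm G (eps Y)) (eta (fo G Y)) = sid (fo G Y))].

Record scdata (k : comPzRingType) := SCData {
  Ob :> Type;
  Hm : Ob -> Ob -> lmodType k;
  mid : forall X, Hm X X;
  mcomp : forall X Y Z, Hm Y Z -> Hm X Y -> Hm X Z;
  zob : Ob;
  bsum : Ob -> Ob -> Ob;
  bi1 : forall X Y, Hm X (bsum X Y);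
  bi2 : forall X Y, Hm Y (bsum X Y);
  bp1 : forall X Y, Hm (bsum X Y) X;
  bp2 : forall X Y, Hm (bsum X Y) Y;
  Pi : Ob -> Ob;
  Pim : forall X Y, Hm X Y -> Hm (Pi X) (Pi Y);
  xi : forall X, Hm (Pi (Pi X)) X }.
Arguments Hm {k s}. Arguments mid {k s} X. Arguments mcomp {k s X Y Z}.
Arguments zob {k s}. Arguments bsum {k s}.
Arguments bi1 {k s} X Y. Arguments bi2 {k s} X Y.
Arguments bp1 {k s} X Y. Arguments bp2 {k s} X Y.
Arguments Pi {k s}. Arguments Pim {k s X Y}. Arguments xi {k s} X.

Notation "g '∘' f" := (mcomp g f) (at level 40, left associativity).

Record sc_axioms (k : comPzRingType) (C : scdata k) : Prop := SCAxioms {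
  ax_compA : forall (X Y Z W : C) (h : Hm Z W) (g : Hm Y Z) (f : Hm X Y),
      h ∘ (g ∘ f) = (h ∘ g) ∘ f;
  ax_comp1 : forall (X Y : C) (f : Hm X Y), mid Y ∘ f = f;
  ax_compm1 : forall (X Y : C) (f : Hm X Y), f ∘ mid X = f;
  ax_compDl : forall (X Y Z : C) (g1 g2 : Hm Y Z) (f : Hm X Y),
      (g1 + g2) ∘ f = (g1 ∘ f) + (g2 ∘ f);
  ax_compZl : forall (X Y Z : C) (a : k) (g : Hm Y Z) (f : Hm X Y),
      (a *: g) ∘ f = a *: (g ∘ f);
  ax_compDr : forall (X Y Z : C) (g : Hm Y Z) (f1 f2 : Hm X Y),
      g ∘ (f1 + f2) = (g ∘ f1) + (g ∘ f2);
  ax_compZr : forall (X Y Z : C) (a : k) (g : Hm Y Z) (f : Hm X Y),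
      g ∘ (a *: f) = a *: (g ∘ f);
  ax_zero : mid (zob : C) = 0;
  ax_b11 : forall X Y : C, bp1 X Y ∘ bi1 X Y = mid X;
  ax_b22 : forall X Y : C, bp2 X Y ∘ bi2 X Y = mid Y;
  ax_b12 : forall X Y : C, bp1 X Y ∘ bi2 X Y = 0;
  ax_b21 : forall X Y : C, bp2 X Y ∘ bi1 X Y = 0;
  ax_bsum : forall X Y : C,
      (bi1 X Y ∘ bp1 X Y) + (bi2 X Y ∘ bp2 X Y) = mid (bsum X Y);
  ax_Pi1 : forall X : C, Pim (mid X) = mid (Pi X);
  ax_PiM : forall (X Y Z : C) (g : Hm Y Z) (f : Hm X Y), Pim (g ∘ f) = Pim g ∘ Pim f;
  ax_PiD : forall (X Y : C) (f g : Hm X Y), Pim (f + g) = Pim f + Pim g;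
  ax_PiZ : forall (X Y : C) (a : k) (f : Hm X Y), Pim (a *: f) = a *: Pim f;
  ax_xinat : forall (X Y : C) (f : Hm X Y), xi Y ∘ Pim (Pim f) = f ∘ xi X;
  ax_xiiso : forall X : C,
      exists g : Hm X (Pi (Pi X)), g ∘ xi X = mid (Pi (Pi X)) /\ xi X ∘ g = mid X;
  ax_xiPi : forall X : C, xi (Pi X) = Pim (xi X) }.

Record supercat (k : comPzRingType) := SuperCat {
  scd :> scdata k;
  scax : sc_axioms scd }.

Section Lemmas.
Variables (k : comPzRingType) (C : supercat k).
Let A := scax C.

Lemma compNl (X Y Z : C) (g : Hm Y Z) (f : Hm X Y) : (- g) ∘ f = - (g ∘ f).
Proof. by rewrite -scaleN1r (ax_compZl A) scaleN1r. Qed.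
Lemma compNr (X Y Z : C) (g : Hm Y Z) (f : Hm X Y) : g ∘ (- f) = - (g ∘ f).
Proof. by rewrite -scaleN1r (ax_compZr A) scaleN1r. Qed.
Lemma PimN (X Y : C) (f : Hm X Y) : Pim (- f) = - Pim f.
Proof. by rewrite -scaleN1r (ax_PiZ A) scaleN1r. Qed.
End Lemmas.

Definition sc_rev k (C : supercat k) : scat :=
  @SCat (Ob C) (fun X Y => (Hm X Y : Type)) (@mid k C) (@mcomp k C)
        (@Pi k C) (@Pim k C) (fun X => - xi X).

Definition is_isoC k (C : supercat k) (X Y : C) (f : Hm X Y) : Prop :=
  exists g : Hm Y X, g ∘ f = mid X /\ f ∘ g = mid Y.

Definition ct_cond k (C : supercat k) (X : C) (phi : Hm (Pi X) X) : Prop :=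
  is_isoC phi /\ phi ∘ Pim phi = xi X.

Record ctob k (C : supercat k) := CtOb {
  ctX : Ob C;
  ctphi : Hm (Pi ctX) ctX;
  ctP : ct_cond ctphi }.
Arguments ctX {k C}. Arguments ctphi {k C}. Arguments ctP {k C}.

Record cthom k (C : supercat k) (Z Z' : ctob C) := CtHom {
  ctf : Hm (ctX Z) (ctX Z');
  ctfP : ctf ∘ ctphi Z = ctphi Z' ∘ Pim ctf }.
Arguments ctf {k C Z Z'}.

Section CT.
Variables (k : comPzRingType) (C : supercat k).
Let A := scax C.

Lemma ct_id_cond (Z : ctob C) : mid (ctX Z) ∘ ctphi Z = ctphi Z ∘ Pim (mid (ctX Z)).
Proof. by rewrite (ax_Pi1 A) (ax_comp1 A) (ax_compm1 A). Qed.

Lemma ct_comp_cond (Z1 Z2 Z3 : ctob C) (g : cthom Z2 Z3) (f : cthom Z1 Z2) :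
  (ctf g ∘ ctf f) ∘ ctphi Z1 = ctphi Z3 ∘ Pim (ctf g ∘ ctf f).
Proof.
by rewrite -(ax_compA A) (ctfP f) (ax_compA A) (ctfP g) -(ax_compA A) (ax_PiM A).
Qed.

Lemma ctPi_cond (Z : ctob C) : ct_cond (- ctphi Z).
Proof.
case: (ctP Z) => [[g [Hg1 Hg2]] He]; split.
  by exists (- g); rewrite compNl compNr opprK compNl compNr opprK.
by rewrite PimN compNl compNr opprK.
Qed.

Lemma ctPim_cond (Z Z' : ctob C) (f : cthom Z Z') :
  ctf f ∘ (- ctphi Z) = (- ctphi Z') ∘ Pim (ctf f).
Proof. by rewrite compNr compNl (ctfP f). Qed.

Lemma ctxi_cond (Z : ctob C) : mid (ctX Z) ∘ (- - ctphi Z) = ctphi Z ∘ Pim (mid (ctX Z)).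
Proof. by rewrite opprK ct_id_cond. Qed.

Definition ct_id (Z : ctob C) : cthom Z Z := CtHom (ct_id_cond Z).
Definition ct_comp (Z1 Z2 Z3 : ctob C) (g : cthom Z2 Z3) (f : cthom Z1 Z2) :
  cthom Z1 Z3 := CtHom (ct_comp_cond g f).
Definition ctPi (Z : ctob C) : ctob C := CtOb (ctPi_cond Z).
Definition ctPim (Z Z' : ctob C) (f : cthom Z Z') : cthom (ctPi Z) (ctPi Z') :=
  @CtHom k C (ctPi Z) (ctPi Z') (ctf f) (ctPim_cond f).
Definition ctxi (Z : ctob C) : cthom (ctPi (ctPi Z)) Z :=
  @CtHom k C (ctPi (ctPi Z)) Z (mid (ctX Z)) (ctxi_cond Z).
End CT.

Definition sc_ct k (C : supercat k) : scat :=
  @SCat (ctob C) (@cthom k C) (@ct_id k C) (@ct_comp k C)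
        (@ctPi k C) (@ctPim k C) (@ctxi k C).

Definition Phi k (C : supercat k) : fdata (sc_ct C) (sc_rev C) :=
  @FData (sc_ct C) (sc_rev C) (@ctX k C) (fun Z Z' f => ctf f).

(* phi_X : Pi (X (+) Pi X) -> X (+) Pi X, i.e. the matrix
   ( 0  xi_X ; id_{Pi X}  0 ) : Pi X (+) Pi^2 X -> X (+) Pi X
   precomposed with the canonical identification
   Pi (X (+) Pi X) = Pi X (+) Pi^2 X  (given by Pi of the projections). *)
Definition phiX k (C : supercat k) (X : C) : Hm (Pi (bsum X (Pi X))) (bsum X (Pi X)) :=
  (bi1 X (Pi X) ∘ xi X ∘ Pim (bp2 X (Pi X))) + (bi2 X (Pi X) ∘ Pim (bp1 X (Pi X))).

Definition psiX k (C : supercat k) (X : C) :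
    Hm (bsum (Pi X) (Pi (Pi X))) (bsum X (Pi X)) :=
  (bi1 X (Pi X) ∘ (- xi X) ∘ bp2 (Pi X) (Pi (Pi X)))
  + (bi2 X (Pi X) ∘ bp1 (Pi X) (Pi (Pi X))).

Definition sumf k (C : supercat k) (X Y : C) (f : Hm X Y) :
    Hm (bsum X (Pi X)) (bsum Y (Pi Y)) :=
  (bi1 Y (Pi Y) ∘ f ∘ bp1 X (Pi X)) + (bi2 Y (Pi Y) ∘ Pim f ∘ bp2 X (Pi X)).

Definition psi_mor_cond k (C : supercat k) : Prop :=
  forall (X Y : C) (f : Hm X Y), sumf f ∘ phiX X = phiX Y ∘ Pim (sumf f).

(* Psi X = (X (+) Pi X, phi_X), Psi f = f (+) Pi f; the proof arguments
   assert that these are objects / morphisms of C^ct. *)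
Definition PsiOb k (C : supercat k) (Ho : forall X : C, ct_cond (phiX X)) (X : C) :
  ctob C := CtOb (Ho X).

Definition Psi k (C : supercat k) (Ho : forall X : C, ct_cond (phiX X))
    (Hmor : psi_mor_cond C) : fdata (sc_rev C) (sc_ct C) :=
  @FData (sc_rev C) (sc_ct C) (PsiOb Ho)
    (fun X Y f => @CtHom k C (PsiOb Ho X) (PsiOb Ho Y) (sumf f) (Hmor X Y f)).

Definition biprod_diag k (C : supercat k) (A B S : C)
    (i1 : Hm A S) (i2 : Hm B S) (p1 : Hm S A) (p2 : Hm S B) : Prop :=
  [/\ p1 ∘ i1 = mid A, p2 ∘ i2 = mid B, p1 ∘ i2 = 0, p2 ∘ i1 = 0 &
      (i1 ∘ p1) + (i2 ∘ p2) = mid S].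

Definition iso_to_sum_C k (C : supercat k) (F : fdata (sc_rev C) (sc_rev C)) : Prop :=
  exists (i1 : forall X : C, Hm X (fo F X)) (i2 : forall X : C, Hm (Pi X) (fo F X))
         (p1 : forall X : C, Hm (fo F X) X) (p2 : forall X : C, Hm (fo F X) (Pi X)),
    (forall X : C, biprod_diag (i1 X) (i2 X) (p1 X) (p2 X)) /\
    (forall (X Y : C) (f : Hm X Y),
       [/\ (fm F f : Hm _ _) ∘ i1 X = i1 Y ∘ f,
           (fm F f : Hm _ _) ∘ i2 X = i2 Y ∘ Pim f,
           p1 Y ∘ (fm F f : Hm _ _) = f ∘ p1 X &
           p2 Y ∘ (fm F f : Hm _ _) = Pim f ∘ p2 X]).

(* G(Z) ~= Z (+) Pi^ct Z in C^ct, functorially in Z, for G : C^ct -> C^ct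
   (morphisms of C^ct are compared through their underlying morphisms,
   composition and sums in C^ct being those of C). *)
Definition iso_to_sum_ct k (C : supercat k) (G : fdata (sc_ct C) (sc_ct C)) : Prop :=
  exists (i1 : forall Z : ctob C, cthom Z (fo G Z))
         (i2 : forall Z : ctob C, cthom (ctPi Z) (fo G Z))
         (p1 : forall Z : ctob C, cthom (fo G Z) Z)
         (p2 : forall Z : ctob C, cthom (fo G Z) (ctPi Z)),
    (forall Z : ctob C,
       @biprod_diag k C (ctX Z) (ctX (ctPi Z)) (ctX (fo G Z))
         (ctf (i1 Z)) (ctf (i2 Z)) (ctf (p1 Z)) (ctf (p2 Z))) /\
    (forall (Z Z' : ctob C) (f : cthom Z Z'),
       [/\ ctf (fm G f) ∘ ctf (i1 Z) = ctf (i1 Z') ∘ ctf f,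
           ctf (fm G f) ∘ ctf (i2 Z) = ctf (i2 Z') ∘ ctf (ctPim f),
           ctf (p1 Z') ∘ ctf (fm G f) = ctf f ∘ ctf (p1 Z) &
           ctf (p2 Z') ∘ ctf (fm G f) = ctf (ctPim f) ∘ ctf (p2 Z)]).

(* Main.v *)
Require Import Defs.
From HB Require Import structures.
From mathcomp Require Import all_boot all_algebra.
Set Implicit Arguments. Unset Strict Implicit. Unset Printing Implicit Defensive.
Import GRing.Theory.
Local Open Scope ring_scope.

Section Calc.
Variables (k : comPzRingType) (C : supercat k).
Let A := scax C.

Lemma cA (X Y Z W : C) (h : Hm Z W) (g : Hm Y Z) (f : Hm X Y) : (h ∘ g) ∘ f = h ∘ (g ∘ f).
Proof. by rewrite (ax_compA A). Qed.
Lemma c1l (X Y : C) (f : Hm X Y) : mid Y ∘ f = f. Proof. exact: ax_comp1. Qed.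
Lemma c1r (X Y : C) (f : Hm X Y) : f ∘ mid X = f. Proof. exact: ax_compm1. Qed.
Lemma cDl (X Y Z : C) (g1 g2 : Hm Y Z) (f : Hm X Y) : (g1 + g2) ∘ f = (g1 ∘ f) + (g2 ∘ f).
Proof. exact: ax_compDl. Qed.
Lemma cDr (X Y Z : C) (g : Hm Y Z) (f1 f2 : Hm X Y) : g ∘ (f1 + f2) = (g ∘ f1) + (g ∘ f2).
Proof. exact: ax_compDr. Qed.
Lemma cZl (X Y Z : C) (a : k) (g : Hm Y Z) (f : Hm X Y) : (a *: g) ∘ f = a *: (g ∘ f).
Proof. exact: ax_compZl. Qed.
Lemma cZr (X Y Z : C) (a : k) (g : Hm Y Z) (f : Hm X Y) : g ∘ (a *: f) = a *: (g ∘ f).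
Proof. exact: ax_compZr. Qed.
Lemma cNl (X Y Z : C) (g : Hm Y Z) (f : Hm X Y) : (- g) ∘ f = - (g ∘ f).
Proof. exact: compNl. Qed.
Lemma cNr (X Y Z : C) (g : Hm Y Z) (f : Hm X Y) : g ∘ (- f) = - (g ∘ f).
Proof. exact: compNr. Qed.
Lemma c0l (X Y Z : C) (f : Hm X Y) : (0 : Hm Y Z) ∘ f = 0.
Proof. have -> : (0 : Hm Y Z) = 0 *: 0 by rewrite scale0r. by rewrite cZl scale0r. Qed.
Lemma c0r (X Y Z : C) (g : Hm Y Z) : g ∘ (0 : Hm X Y) = 0.
Proof. have -> : (0 : Hm X Y) = 0 *: 0 by rewrite scale0r. by rewrite cZr scale0r. Qed.
Lemma P1 (X : C) : Pim (mid X) = mid (Pi X). Proof. exact: ax_Pi1. Qed.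
Lemma PM (X Y Z : C) (g : Hm Y Z) (f : Hm X Y) : Pim g ∘ Pim f = Pim (g ∘ f).
Proof. by rewrite (ax_PiM A). Qed.
Lemma PMr (X Y Z W : C) (g : Hm Y Z) (f : Hm X Y) (h : Hm W (Pi X)) :
  Pim g ∘ (Pim f ∘ h) = Pim (g ∘ f) ∘ h.
Proof. by rewrite -PM cA. Qed.
Lemma PD (X Y : C) (f g : Hm X Y) : Pim (f + g) = Pim f + Pim g. Proof. exact: ax_PiD. Qed.
Lemma PZ (X Y : C) (a : k) (f : Hm X Y) : Pim (a *: f) = a *: Pim f. Proof. exact: ax_PiZ. Qed.
Lemma PN (X Y : C) (f : Hm X Y) : Pim (- f) = - Pim f. Proof. exact: PimN. Qed.
Lemma P0 (X Y : C) : Pim (0 : Hm X Y) = 0.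
Proof. have -> : (0 : Hm X Y) = 0 *: 0 by rewrite scale0r. by rewrite PZ scale0r. Qed.

Lemma b11 (X Y : C) : bp1 X Y ∘ bi1 X Y = mid X. Proof. exact: ax_b11. Qed.
Lemma b22 (X Y : C) : bp2 X Y ∘ bi2 X Y = mid Y. Proof. exact: ax_b22. Qed.
Lemma b12 (X Y : C) : bp1 X Y ∘ bi2 X Y = 0. Proof. exact: ax_b12. Qed.
Lemma b21 (X Y : C) : bp2 X Y ∘ bi1 X Y = 0. Proof. exact: ax_b21. Qed.
Lemma b11r (X Y W : C) (f : Hm W X) : bp1 X Y ∘ (bi1 X Y ∘ f) = f.
Proof. by rewrite -cA b11 c1l. Qed.
Lemma b22r (X Y W : C) (f : Hm W Y) : bp2 X Y ∘ (bi2 X Y ∘ f) = f.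
Proof. by rewrite -cA b22 c1l. Qed.
Lemma b12r (X Y W : C) (f : Hm W Y) : bp1 X Y ∘ (bi2 X Y ∘ f) = 0.
Proof. by rewrite -cA b12 c0l. Qed.
Lemma b21r (X Y W : C) (f : Hm W X) : bp2 X Y ∘ (bi1 X Y ∘ f) = 0.
Proof. by rewrite -cA b21 c0l. Qed.
Lemma bsumE (X Y : C) : (bi1 X Y ∘ bp1 X Y) + (bi2 X Y ∘ bp2 X Y) = mid (bsum X Y).
Proof. exact: ax_bsum. Qed.

Lemma bext (X Y W : C) (f g : Hm (bsum X Y) W) :
  f ∘ bi1 X Y = g ∘ bi1 X Y -> f ∘ bi2 X Y = g ∘ bi2 X Y -> f = g.
Proof. by move=> H1 H2; rewrite -(c1r f) -(c1r g) -bsumE !cDr !(ax_compA A) H1 H2. Qed.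
Lemma bextr (X Y W : C) (f g : Hm W (bsum X Y)) :
  bp1 X Y ∘ f = bp1 X Y ∘ g -> bp2 X Y ∘ f = bp2 X Y ∘ g -> f = g.
Proof. by move=> H1 H2; rewrite -(c1l f) -(c1l g) -bsumE !cDl !cA H1 H2. Qed.
Lemma bextP (X Y W : C) (f g : Hm (Pi (bsum X Y)) W) :
  f ∘ Pim (bi1 X Y) = g ∘ Pim (bi1 X Y) -> f ∘ Pim (bi2 X Y) = g ∘ Pim (bi2 X Y) -> f = g.
Proof.
move=> H1 H2; rewrite -(c1r f) -(c1r g) -P1 -bsumE PD -!PM !cDr !(ax_compA A) H1 H2.
done.
Qed.

Lemma bextPP (X Y W : C) (f g : Hm (Pi (Pi (bsum X Y))) W) :
  f ∘ Pim (Pim (bi1 X Y)) = g ∘ Pim (Pim (bi1 X Y)) -> f ∘ Pim (Pim (bi2 X Y)) = g ∘ Pim (Pim (bi2 X Y)) -> f = g.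
Proof.
move=> H1 H2; rewrite -(c1r f) -(c1r g) -!P1 -bsumE !PD -!PM !cDr !(ax_compA A) H1 H2.
done.
Qed.
Lemma xinat (X Y : C) (f : Hm X Y) : xi Y ∘ Pim (Pim f) = f ∘ xi X. Proof. exact: ax_xinat. Qed.
Lemma xinatr (X Y W : C) (f : Hm X Y) (h : Hm W _) : xi Y ∘ (Pim (Pim f) ∘ h) = f ∘ (xi X ∘ h).
Proof. by rewrite -cA xinat cA. Qed.
Lemma xiPi (X : C) : xi (Pi X) = Pim (xi X). Proof. exact: ax_xiPi. Qed.

Lemma xiinv_ex (X : C) : exists g : Hm X (Pi (Pi X)), (g ∘ xi X == mid _) && (xi X ∘ g == mid X).
Proof. by case: (ax_xiiso A X) => g [H1 H2]; exists g; rewrite H1 H2 !eqxx. Qed.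
Definition xiinv (X : C) := xchoose (xiinv_ex X).
Lemma xiinv_xi (X : C) : xiinv X ∘ xi X = mid _.
Proof. by case/andP: (xchooseP (xiinv_ex X)) => /eqP. Qed.
Lemma xi_xiinv (X : C) : xi X ∘ xiinv X = mid _.
Proof. by case/andP: (xchooseP (xiinv_ex X)) => _ /eqP. Qed.
Lemma xiinv_xir (X W : C) (f : Hm W _) : xiinv X ∘ (xi X ∘ f) = f.
Proof. by rewrite -cA xiinv_xi c1l. Qed.
Lemma xi_xiinvr (X W : C) (f : Hm W X) : xi X ∘ (xiinv X ∘ f) = f.
Proof. by rewrite -cA xi_xiinv c1l. Qed.

End Calc.

Ltac csimp := repeat progress (rewrite ?cA ?cDl ?cDr ?cZl ?cZr ?cNl ?cNr ?c0l ?c0r ?c1l ?c1r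
  ?PD ?PZ ?PN ?P0 ?P1 ?PMr ?PM ?b11 ?b22 ?b12 ?b21 ?b11r ?b22r ?b12r ?b21r
  ?xinat ?xinatr ?xiinv_xi ?xi_xiinv ?xiinv_xir ?xi_xiinvr
  ?addr0 ?add0r ?oppr0 ?opprK ?scaler0 ?scale0r ?scaleNr ?scalerN ?scalerDr).

Ltac sg := match goal with |- ?g => idtac g end.

Section Main.
Variables (k : comPzRingType) (C : supercat k).
Let A := scax C.

Lemma cthom_eq (Z Z' : ctob C) (f g : cthom Z Z') : ctf f = ctf g -> f = g.
Proof.
case: f g => f Hf [g Hg] /= E; subst g; congr CtHom; exact: eq_irrelevance.
Qed.

Lemma ctinv_ex (Z : ctob C) :
  exists g : Hm (ctX Z) (Pi (ctX Z)), (g ∘ ctphi Z == mid _) && (ctphi Z ∘ g == mid _).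
Proof. by case: (ctP Z) => -[g [H1 H2]] _; exists g; rewrite H1 H2 !eqxx. Qed.
Definition ctinv (Z : ctob C) := xchoose (ctinv_ex Z).
Lemma ctinv_phi (Z : ctob C) : ctinv Z ∘ ctphi Z = mid _.
Proof. by case/andP: (xchooseP (ctinv_ex Z)) => /eqP. Qed.
Lemma phi_ctinv (Z : ctob C) : ctphi Z ∘ ctinv Z = mid _.
Proof. by case/andP: (xchooseP (ctinv_ex Z)) => _ /eqP. Qed.
Lemma ctinv_phir (Z : ctob C) W (f : Hm W _) : ctinv Z ∘ (ctphi Z ∘ f) = f.
Proof. by rewrite -cA ctinv_phi c1l. Qed.
Lemma phi_ctinvr (Z : ctob C) W (f : Hm W _) : ctphi Z ∘ (ctinv Z ∘ f) = f.
Proof. by rewrite -cA phi_ctinv c1l. Qed.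
Lemma phiP (Z : ctob C) : ctphi Z ∘ Pim (ctphi Z) = xi (ctX Z).
Proof. by case: (ctP Z). Qed.

Ltac cs := repeat progress (csimp; rewrite ?ctinv_phi ?phi_ctinv ?ctinv_phir ?phi_ctinvr).

Lemma inv_uniq (X Y : C) (f : Hm X Y) g h : g ∘ f = mid _ -> f ∘ h = mid _ -> g = h.
Proof. by move=> H1 H2; rewrite -(c1r g) -H2 -cA H1 c1l. Qed.

Lemma ctinvPi (Z : ctob C) : ctinv (ctPi Z) = - ctinv Z.
Proof.
apply: (@inv_uniq _ _ (ctphi (ctPi Z))); first exact: ctinv_phi.
by rewrite /= cNl cNr opprK phi_ctinv.
Qed.

Lemma ctinv_nat (Z Z' : ctob C) (f : cthom Z Z') : ctinv Z' ∘ ctf f = Pim (ctf f) ∘ ctinv Z.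
Proof.
rewrite -[ctinv Z' ∘ _]c1r -(phi_ctinv Z); csimp.
by rewrite -(cA (ctf f)) (ctfP f) cA ctinv_phir.
Qed.

Lemma inv_cond (X Y : C) (p : Hm (Pi X) X) (q : Hm (Pi Y) Y) (f : Hm X Y) g :
  f ∘ p = q ∘ Pim f -> g ∘ f = mid _ -> f ∘ g = mid _ -> g ∘ q = p ∘ Pim g.
Proof.
move=> Hf H1 H2.
rewrite -[g ∘ q]c1r -P1 -H2 -PM -(cA _ (Pim f)) (cA g q) -Hf -cA H1 c1l //.
Qed.

Lemma iso_ct (Z Z' : ctob C) (f : cthom Z Z') (g : Hm (ctX Z') (ctX Z)) :
  g ∘ ctf f = mid _ -> ctf f ∘ g = mid _ -> @is_iso_s (sc_ct C) Z Z' f.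
Proof.
move=> H1 H2; exists (@CtHom k C Z' Z g (inv_cond (ctfP f) H1 H2)).
by split; apply: cthom_eq.
Qed.


Lemma part1 : exists alpha : forall Z : ctob C, Hm (ctX Z) (Pi (ctX Z)),
     (forall Z : ctob C, alpha Z ∘ ctphi Z = mid (Pi (ctX Z)) /\
                         ctphi Z ∘ alpha Z = mid (ctX Z)) /\
     @is_superfunctor (sc_ct C) (sc_rev C) (Phi C) alpha.
Proof.
exists ctinv; split; first by move=> Z; rewrite ctinv_phi phi_ctinv.
split.
- by split.
- move=> Z Z' f /=; exact: ctinv_nat.
- by move=> Z; exists (ctphi Z); rewrite /= ctinv_phi phi_ctinv.
- move=> Z /=; rewrite ctinvPi; csimp.
  by rewrite -phiP cA PMr phi_ctinv P1 c1l phi_ctinv.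
Qed.

Lemma Ho (X : C) : ct_cond (phiX X).
Proof.
split.
  exists (Pim (bi1 X (Pi X)) ∘ bp2 X (Pi X) + Pim (bi2 X (Pi X)) ∘ (xiinv X ∘ bp1 X (Pi X))).
  rewrite /phiX; split.
    by apply: bextP; csimp.
  by apply: bext; csimp.
rewrite /phiX; apply: bextPP; csimp; rewrite ?xinat; csimp; by rewrite ?xiPi.
Qed.

Lemma Hmor : psi_mor_cond C.
Proof. by move=> X Y f; rewrite /sumf /phiX; apply: bextP; csimp. Qed.

Lemma psi_cond (X : C) : psiX X ∘ phiX (Pi X) = (- phiX X) ∘ Pim (psiX X).
Proof. by rewrite /psiX /phiX; apply: bextP; csimp; rewrite ?xiPi. Qed.

Definition PsiH := Psi Ho Hmor.
Definition alphaPsi (X : C) : cthom (fo PsiH (Pi X)) (ctPi (fo PsiH X)) :=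
  @CtHom k C (PsiOb Ho (Pi X)) (ctPi (PsiOb Ho X)) (psiX X) (psi_cond X).

Definition psiinv (X : C) : Hm (bsum X (Pi X)) (bsum (Pi X) (Pi (Pi X))) :=
  bi1 (Pi X) (Pi (Pi X)) ∘ bp2 X (Pi X) - bi2 (Pi X) (Pi (Pi X)) ∘ (xiinv X ∘ bp1 X (Pi X)).
Lemma psiinv_psi (X : C) : psiinv X ∘ psiX X = mid _.
Proof. by rewrite /psiinv /psiX; apply: bext; csimp. Qed.
Lemma psi_psiinv (X : C) : psiX X ∘ psiinv X = mid _.
Proof. by rewrite /psiinv /psiX; apply: bext; csimp. Qed.

Lemma sumf_comp (X Y Z : C) (g : Hm Y Z) (f : Hm X Y) : sumf (g ∘ f) = sumf g ∘ sumf f.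
Proof. by rewrite /sumf; apply: bext; csimp. Qed.
Lemma sumf1 (X : C) : sumf (mid X) = mid _.
Proof. by rewrite /sumf; apply: bext; csimp. Qed.

Lemma Psi_super : @is_superfunctor (sc_rev C) (sc_ct C) PsiH alphaPsi.
Proof.
split.
- split.
    by move=> X; apply: cthom_eq; rewrite /= sumf1.
  by move=> X Y Z g f; apply: cthom_eq; rewrite /= sumf_comp.
- by move=> X Y f; apply: cthom_eq => /=; rewrite /psiX /sumf; apply: bext; csimp.
- move=> X; exact: (@iso_ct (PsiOb Ho (Pi X)) (ctPi (PsiOb Ho X)) (alphaPsi X) (psiinv X) (psiinv_psi X) (psi_psiinv X)).
- by move=> X; apply: cthom_eq => /=; rewrite /psiX /sumf; apply: bext; csimp; rewrite ?xiPi.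
Qed.

Lemma sumC : iso_to_sum_C (fcomp (Phi C) PsiH).
Proof.
exists (fun X => bi1 X (Pi X)), (fun X => bi2 X (Pi X)), (fun X => bp1 X (Pi X)), (fun X => bp2 X (Pi X)).
split; first by move=> X; split; rewrite ?b11 ?b22 ?b12 ?b21 ?bsumE.
by move=> X Y f; rewrite /= /sumf; split; csimp.
Qed.

Lemma xiinv_nat (X Y : C) (f : Hm X Y) : xiinv Y ∘ f = Pim (Pim f) ∘ xiinv X.
Proof.
rewrite -[xiinv Y ∘ f]c1r -(xi_xiinv X) -cA (cA (xiinv Y)) -xinat.
by rewrite -cA xiinv_xi c1l.
Qed.

Lemma iso3 : nat_iso (fcomp (fPi (sc_rev C)) (Phi C)) (fcomp (Phi C) (fPi (sc_ct C))).
Proof.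
exists (fun Z : ctob C => ctphi Z); split.
  by move=> Z Z' f /=; rewrite (ctfP f).
by move=> Z; exists (ctinv Z); rewrite /= ctinv_phi phi_ctinv.
Qed.

Lemma iso4 : nat_iso (fcomp (Phi C) (fPi (sc_ct C))) (Phi C).
Proof.
exists (fun Z : ctob C => mid (ctX Z)); split.
  by move=> Z Z' f /=; rewrite c1l c1r.
by move=> Z; exists (mid (ctX Z)); rewrite /= c1l.
Qed.

Definition psiinvH (X : C) : cthom (ctPi (PsiOb Ho X)) (PsiOb Ho (Pi X)) :=
  @CtHom k C (ctPi (PsiOb Ho X)) (PsiOb Ho (Pi X)) (psiinv X)
    (inv_cond (psi_cond X) (psiinv_psi X) (psi_psiinv X)).

Lemma iso5 : nat_iso (fcomp (fPi (sc_ct C)) PsiH) (fcomp PsiH (fPi (sc_rev C))).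
Proof.
exists psiinvH; split.
  by move=> X Y f; apply: cthom_eq => /=; rewrite /psiinv /sumf; apply: bext; cs; rewrite ?xiinv_nat.
move=> X; exact: (@iso_ct _ _ (psiinvH X) (psiX X) (psi_psiinv X) (psiinv_psi X)).
Qed.

Definition eX (X : C) : Hm (bsum (Pi X) (Pi (Pi X))) (bsum X (Pi X)) :=
  bi1 X (Pi X) ∘ (xi X ∘ bp2 (Pi X) (Pi (Pi X))) + bi2 X (Pi X) ∘ bp1 (Pi X) (Pi (Pi X)).
Definition eXinv (X : C) : Hm (bsum X (Pi X)) (bsum (Pi X) (Pi (Pi X))) :=
  bi1 (Pi X) (Pi (Pi X)) ∘ bp2 X (Pi X) + bi2 (Pi X) (Pi (Pi X)) ∘ (xiinv X ∘ bp1 X (Pi X)).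
Lemma eX_cond (X : C) : eX X ∘ phiX (Pi X) = phiX X ∘ Pim (eX X).
Proof. by rewrite /eX /phiX; apply: bextP; cs; rewrite ?xiPi. Qed.
Lemma eXinv_eX (X : C) : eXinv X ∘ eX X = mid _.
Proof. by rewrite /eX /eXinv; apply: bext; cs. Qed.
Lemma eX_eXinv (X : C) : eX X ∘ eXinv X = mid _.
Proof. by rewrite /eX /eXinv; apply: bext; cs. Qed.
Definition eH (X : C) : cthom (PsiOb Ho (Pi X)) (PsiOb Ho X) :=
  @CtHom k C (PsiOb Ho (Pi X)) (PsiOb Ho X) (eX X) (eX_cond X).

Lemma iso6 : nat_iso (fcomp PsiH (fPi (sc_rev C))) PsiH.
Proof.
exists eH; split.
  by move=> X Y f; apply: cthom_eq => /=; rewrite /eX /sumf; apply: bext; cs; rewrite ?xiinv_nat.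
move=> X; exact: (@iso_ct _ _ (eH X) (eXinv X) (eXinv_eX X) (eX_eXinv X)).
Qed.

Variable u : k.
Hypothesis Hu : 2%:R * u = 1.

Lemma uu (X Y : C) (f : Hm X Y) : u *: f + u *: f = f.
Proof. by rewrite -scalerDl -mulr2n -mulr_natl Hu scale1r. Qed.

Lemma j1_cond (Z : ctob C) : (bi1 _ _ + bi2 _ _ ∘ ctinv Z) ∘ ctphi Z
   = phiX (ctX Z) ∘ Pim (bi1 _ _ + bi2 _ _ ∘ ctinv Z).
Proof. by rewrite /phiX -phiP; apply: bextr; cs. Qed.
Lemma j2_cond (Z : ctob C) : (bi1 _ _ - bi2 _ _ ∘ ctinv Z) ∘ (- ctphi Z)
   = phiX (ctX Z) ∘ Pim (bi1 _ _ - bi2 _ _ ∘ ctinv Z).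
Proof. by rewrite /phiX -phiP; apply: bextr; cs. Qed.
Lemma q1_cond (Z : ctob C) : (u *: (bp1 _ _ + ctphi Z ∘ bp2 _ _)) ∘ phiX (ctX Z)
   = ctphi Z ∘ Pim (u *: (bp1 _ _ + ctphi Z ∘ bp2 _ _)).
Proof. by rewrite /phiX -phiP; apply: bextP; cs. Qed.
Lemma q2_cond (Z : ctob C) : (u *: (bp1 _ _ - ctphi Z ∘ bp2 _ _)) ∘ phiX (ctX Z)
   = (- ctphi Z) ∘ Pim (u *: (bp1 _ _ - ctphi Z ∘ bp2 _ _)).
Proof. by rewrite /phiX -phiP; apply: bextP; cs. Qed.





Definition j1 (Z : ctob C) : cthom Z (PsiOb Ho (ctX Z)) := @CtHom k C Z (PsiOb Ho (ctX Z)) _ (j1_cond Z).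
Definition j2 (Z : ctob C) : cthom (ctPi Z) (PsiOb Ho (ctX Z)) := @CtHom k C (ctPi Z) (PsiOb Ho (ctX Z)) _ (j2_cond Z).
Definition q1 (Z : ctob C) : cthom (PsiOb Ho (ctX Z)) Z := @CtHom k C (PsiOb Ho (ctX Z)) Z _ (q1_cond Z).
Definition q2 (Z : ctob C) : cthom (PsiOb Ho (ctX Z)) (ctPi Z) := @CtHom k C (PsiOb Ho (ctX Z)) (ctPi Z) _ (q2_cond Z).

Lemma sumct : iso_to_sum_ct (fcomp PsiH (Phi C)).
Proof.
exists j1, j2, q1, q2; split.
  move=> Z; rewrite /=; split; cs; rewrite ?uu ?subrr //.
  by apply: bext; cs; rewrite addrACA ?subrr ?addNr ?addr0 ?add0r uu.
move=> Z Z' f; rewrite /= /sumf; split; cs; rewrite ?ctinv_nat //.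
  by rewrite -(cA (ctf f) (ctphi Z)) (ctfP f); cs.
by rewrite -(cA (ctf f) (ctphi Z)) (ctfP f); cs.
Qed.

Lemma Pp1inv (X : C) : Pim (bp1 X (Pi X)) ∘ ctinv (PsiOb Ho X) = bp2 X (Pi X).
Proof.
have E : Pim (bp1 X (Pi X)) = bp2 X (Pi X) ∘ ctphi (PsiOb Ho X) by rewrite /= /phiX; cs.
by rewrite E cA phi_ctinv c1r.
Qed.

Lemma adj1 : adjoint (Phi C) PsiH.
Proof.
exists j1, (fun X : C => bp1 X (Pi X)); split.
- by move=> Z Z' f; apply: cthom_eq => /=; rewrite /sumf; cs; rewrite ctinv_nat.
- by move=> X Y f /=; rewrite /sumf; cs.
- by move=> Z /=; cs.
- by move=> Y; apply: cthom_eq => /=; rewrite /sumf; cs; rewrite Pp1inv bsumE.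
Qed.

Lemma r_cond (Z : ctob C) : (bp1 _ _ + ctphi Z ∘ bp2 _ _) ∘ phiX (ctX Z)
   = ctphi Z ∘ Pim (bp1 _ _ + ctphi Z ∘ bp2 _ _).
Proof. by rewrite /phiX -phiP; apply: bextP; cs. Qed.
Definition rH (Z : ctob C) : cthom (PsiOb Ho (ctX Z)) Z := @CtHom k C (PsiOb Ho (ctX Z)) Z _ (r_cond Z).

Lemma adj2 : adjoint PsiH (Phi C).
Proof.
exists (fun X : C => bi1 X (Pi X)), rH; split.
- by move=> X Y f /=; rewrite /sumf; cs.
- by move=> Z Z' f; apply: cthom_eq => /=; rewrite /sumf; cs; rewrite -(cA (ctf f) (ctphi Z)) (ctfP f); cs.
- by move=> X; apply: cthom_eq => /=; rewrite /sumf /phiX; cs; rewrite bsumE.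
- by move=> Z /=; cs.
Qed.

End Main.

Lemma main_ok (k : comPzRingType) (C : supercat k) : (exists u : k, 2%:R * u = 1) ->
   exists (Ho : forall X : C, ct_cond (phiX X)) (Hmor : psi_mor_cond C),
     (exists alpha : forall X : C,
         cthom (fo (Psi Ho Hmor) (Pi X)) (ctPi (fo (Psi Ho Hmor) X)),
        (forall X : C, ctf (alpha X) = psiX X) /\
        @is_superfunctor (sc_rev C) (sc_ct C) (Psi Ho Hmor) alpha)
     /\ iso_to_sum_C (fcomp (Phi C) (Psi Ho Hmor))
     /\ iso_to_sum_ct (fcomp (Psi Ho Hmor) (Phi C))
     /\ nat_iso (fcomp (fPi (sc_rev C)) (Phi C)) (fcomp (Phi C) (fPi (sc_ct C)))
     /\ nat_iso (fcomp (Phi C) (fPi (sc_ct C))) (Phi C)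
     /\ nat_iso (fcomp (fPi (sc_ct C)) (Psi Ho Hmor)) (fcomp (Psi Ho Hmor) (fPi (sc_rev C)))
     /\ nat_iso (fcomp (Psi Ho Hmor) (fPi (sc_rev C))) (Psi Ho Hmor)
     /\ adjoint (Phi C) (Psi Ho Hmor)
     /\ adjoint (Psi Ho Hmor) (Phi C).
Proof.
case=> u0 Hu0; exists (@Ho k C), (@Hmor k C).
split; first by exists (@alphaPsi k C); split=> //; exact: (Psi_super C).
split; first exact: (sumC C).
split; first exact: (sumct C Hu0).
do 4 (split; first by [exact: (iso3 C) | exact: (iso4 C) | exact: (iso5 C) | exact: (iso6 C)]).
split; [exact: (adj1 C) | exact: (adj2 C)].
Qed.

Unset Implicit Arguments.
Set Strict Implicit.
Theorem mainTheorem10 (k : comPzRingType) (C : supercat k) :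
  (exists alpha : forall Z : ctob C, Hm (ctX Z) (Pi (ctX Z)),
     (forall Z : ctob C, alpha Z ∘ ctphi Z = mid (Pi (ctX Z)) /\
                         ctphi Z ∘ alpha Z = mid (ctX Z)) /\
     @is_superfunctor (sc_ct C) (sc_rev C) (Phi C) alpha)
  /\
  ((exists u : k, 2%:R * u = 1) ->
   exists (Ho : forall X : C, ct_cond (phiX X)) (Hmor : psi_mor_cond C),
     (exists alpha : forall X : C,
         cthom (fo (Psi Ho Hmor) (Pi X)) (ctPi (fo (Psi Ho Hmor) X)),
        (forall X : C, ctf (alpha X) = psiX X) /\
        @is_superfunctor (sc_rev C) (sc_ct C) (Psi Ho Hmor) alpha)
     /\ iso_to_sum_C (fcomp (Phi C) (Psi Ho Hmor))
     /\ iso_to_sum_ct (fcomp (Psi Ho Hmor) (Phi C))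
     /\ nat_iso (fcomp (fPi (sc_rev C)) (Phi C)) (fcomp (Phi C) (fPi (sc_ct C)))
     /\ nat_iso (fcomp (Phi C) (fPi (sc_ct C))) (Phi C)
     /\ nat_iso (fcomp (fPi (sc_ct C)) (Psi Ho Hmor)) (fcomp (Psi Ho Hmor) (fPi (sc_rev C)))
     /\ nat_iso (fcomp (Psi Ho Hmor) (fPi (sc_rev C))) (Psi Ho Hmor)
     /\ adjoint (Phi C) (Psi Ho Hmor)
     /\ adjoint (Psi Ho Hmor) (Phi C)).
Proof. split; [exact: (part1 C) | exact: (main_ok C)]. Qed.
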